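(* Let $\mathcal{C}$ be a category with pushouts and pullbacks, equipped with a costable factorisation system $(\mathcal{E},\mathcal{M})$ such that every morphism of $\mathcal{M}$ is a monomorphism. Let $\mathcal{A}$ be a subcategory of $\mathcal{C}$ containing $\mathcal{M}$, stable under pullback, and such that for every cospan $X\xrightarrow{f}A\xleftarrow{g}Y$ in $\mathcal{A}$, the unique induced morphism from the pushout (in $\mathcal{C}$) of the pullback span (in $\mathcal{C}$) of $f,g$ to $A$ lies in $\mathcal{M}$. Then the square \[ \begin{array}{ccc} \mathcal{A}+_{|\mathcal{A}|}\mathcal{A}^{op} & \longrightarrow & \mathrm{Span}(\mathcal{A})\\ \downarrow & & \downarrow \Pi\\ \mathrm{Cospan}(\mathcal{C}) & \xrightarrow{\ \Gamma\ } & \mathrm{Corel}(\mathcal{C}) \end{array} \] is a pushout in the category $\mathbf{CAT}$ of categories and functors.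
   Context: Composition is written diagrammatically ($f;g$ means first $f$, then $g$). A factorisation system $(\mathcal{E},\mathcal{M})$: subcategories containing all isomorphisms such that every morphism factors as $e;m$ with $e\in\mathcal{E}$, $m\in\mathcal{M}$, with the unique diagonal fill-in property (given $f=e;m$, $f'=e';m'$ and $u,v$ with $f;v=u;f'$, there is a unique $s$ with $e;s=u;e'$, $m;v=s;m'$). Costable: $\mathcal{M}$ stable under pushout (in a pushout square, if a morphism out of the apex is in $\mathcal{M}$, so is the opposite side). $\mathcal{A}$ stable under pullback: in a pullback square, if a morphism into the corner lies in $\mathcal{A}$, so does the opposite side. $\mathrm{Cospan}(\mathcal{C})$ (resp. $\mathrm{Span}(\mathcal{C})$): objects of $\mathcal{C}$, morphisms isomorphism classes of cospans (resp. spans), composed by pushout (resp. pullback); $\mathrm{Span}(\mathcal{A})$ is the subcategory of spans with both legs in $\mathcal{A}$. $\mathrm{Corel}(\mathcal{C})$: objects of $\mathcal{C}$, morphisms $X\to Y$ equivalence classes of cospans $X\xrightarrow{f}N\xleftarrow{g}Y$ under the equivalence relation generated by relating it to $X\xrightarrow{f'}N'\xleftarrow{g'}Y$ whenever some $m\colon N\to N'$ in $\mathcal{M}$ has $f;m=f'$, $g;m=g'$; composition by pushout. $\Gamma$ is the identity-on-objects functor sending a cospan to the corelation it represents. $\Pi$ is the identity-on-objects functor sending a span in $\mathcal{A}$ to the corelation represented by its pushout cospan in $\mathcal{C}$. $\mathcal{A}+_{|\mathcal{A}|}\mathcal{A}^{op}$ is the category with the objects of $\mathcal{A}$ whose morphisms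 are finite zigzags $X\xrightarrow{f}\cdot\xleftarrow{g}\cdot\xrightarrow{h}\cdots Y$ of non-identity morphisms of $\mathcal{A}$ (alternating direction), composed by concatenation, composing consecutive same-direction arrows in $\mathcal{A}$ and removing resulting identities, with the empty zigzag as identity (equivalently the pushout of $\mathcal{A}$ and $\mathcal{A}^{op}$ over the discrete category on the objects). The functor to $\mathrm{Span}(\mathcal{A})$ sends a forward arrow $f$ to the span $(\mathrm{id},f)$ and a backward arrow $g$ to $(g,\mathrm{id})$, extended by composition; the functor to $\mathrm{Cospan}(\mathcal{C})$ sends $f$ forward to the cospan $(f,\mathrm{id})$ and $g$ backward to $(\mathrm{id},g)$, extended by composition. *)

(* Defs.v *)
From Stdlib Require Import Relations.

Record Cat := {
  Ob :> Type;
  Hm : Ob -> Ob -> Type;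
  Heq : forall a b, Hm a b -> Hm a b -> Prop;
  Cid : forall a, Hm a a;
  Cmp : forall a b c, Hm a b -> Hm b c -> Hm a c   (* diagrammatic: f then g *)
}.
Arguments Hm {_} _ _.
Arguments Heq {_ _ _} _ _.
Arguments Cid {_} _.
Arguments Cmp {_ _ _ _} _ _.

Infix ">>" := Cmp (at level 40, left associativity).
Infix "=~" := Heq (at level 70).

Definition IsCategory (C : Cat) : Prop :=
  (forall a b : C, equiv (Hm a b) (@Heq C a b)) /\
  (forall (a b c : C) (f f' : Hm a b) (g g' : Hm b c),
      f =~ f' -> g =~ g' -> f >> g =~ f' >> g') /\
  (forall (a b : C) (f : Hm a b), Cid a >> f =~ f) /\
  (forall (a b : C) (f : Hm a b), f >> Cid b =~ f) /\
  (forall (a b c d : C) (f : Hm a b) (g : Hm b c) (h : Hm c d),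
      (f >> g) >> h =~ f >> (g >> h)).

Record Functor (X Y : Cat) := {
  Fob : Ob X -> Ob Y;
  Fhm : forall a b, Hm a b -> Hm (Fob a) (Fob b)
}.
Arguments Fob {_ _} _ _.
Arguments Fhm {_ _} _ {_ _} _.

Definition IsFunctor {X Y : Cat} (F : Functor X Y) : Prop :=
  (forall a b (f g : Hm a b), f =~ g -> Fhm F f =~ Fhm F g) /\
  (forall a, Fhm F (Cid a) =~ Cid (Fob F a)) /\
  (forall a b c (f : Hm a b) (g : Hm b c), Fhm F (f >> g) =~ Fhm F f >> Fhm F g).

Definition Fcomp {X Y Z : Cat} (F : Functor X Y) (G : Functor Y Z) : Functor X Z :=
  {| Fob := fun a => Fob G (Fob F a);
     Fhm := fun a b f => Fhm G (Fhm F f) |}.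

Definition hcast {Y : Cat} {a b a' b' : Ob Y} (ea : a = a') (eb : b = b')
  (h : Hm a b) : Hm a' b' :=
  match ea in _ = a1 return Hm a1 b' with
  | eq_refl => match eb in _ = b1 return Hm a b1 with eq_refl => h end
  end.

Definition FunEq {X Y : Cat} (F G : Functor X Y) : Prop :=
  exists e : forall x, Fob F x = Fob G x,
    forall a b (f : Hm a b), hcast (e a) (e b) (Fhm F f) =~ Fhm G f.

Definition IsPushoutCAT {A0 B0 C0 P0 : Cat}
  (f : Functor A0 B0) (g : Functor A0 C0)
  (i1 : Functor B0 P0) (i2 : Functor C0 P0) : Prop :=
  FunEq (Fcomp f i1) (Fcomp g i2) /\
  forall (D : Cat), IsCategory D ->
  forall (h : Functor B0 D) (k : Functor C0 D),
    IsFunctor h -> IsFunctor k -> FunEq (Fcomp f h) (Fcomp g k) ->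
    exists u : Functor P0 D,
      IsFunctor u /\ FunEq (Fcomp i1 u) h /\ FunEq (Fcomp i2 u) k /\
      forall u' : Functor P0 D,
        IsFunctor u' -> FunEq (Fcomp i1 u') h -> FunEq (Fcomp i2 u') k ->
        FunEq u' u.

Definition MorPred (C : Cat) := forall a b : Ob C, Hm a b -> Prop.

Definition IsIso {C : Cat} {a b : Ob C} (f : Hm a b) : Prop :=
  exists g : Hm b a, f >> g =~ Cid a /\ g >> f =~ Cid b.

Definition IsMono {C : Cat} {a b : Ob C} (m : Hm a b) : Prop :=
  forall w (u v : Hm w a), u >> m =~ v >> m -> u =~ v.

(* subcategory (wide, given by a class of morphisms) *)
Definition IsSubcat {C : Cat} (P : MorPred C) : Prop :=
  (forall a b (f g : Hm a b), f =~ g -> P a b f -> P a b g) /\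
  (forall a, P a a (Cid a)) /\
  (forall a b c (f : Hm a b) (g : Hm b c), P a b f -> P b c g -> P a c (f >> g)).

Definition ContainsIsos {C : Cat} (P : MorPred C) : Prop :=
  forall a b (f : Hm a b), IsIso f -> P a b f.

Definition IsPullback {C : Cat} {a b c p : Ob C}
  (f : Hm a c) (g : Hm b c) (p1 : Hm p a) (p2 : Hm p b) : Prop :=
  p1 >> f =~ p2 >> g /\
  forall w (u : Hm w a) (v : Hm w b), u >> f =~ v >> g ->
    exists t : Hm w p, (t >> p1 =~ u /\ t >> p2 =~ v) /\
      forall t' : Hm w p, t' >> p1 =~ u -> t' >> p2 =~ v -> t' =~ t.

Definition IsPushout {C : Cat} {a b c q : Ob C}
  (f : Hm a b) (g : Hm a c) (q1 : Hm b q) (q2 : Hm c q) : Prop :=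
  f >> q1 =~ g >> q2 /\
  forall w (u : Hm b w) (v : Hm c w), f >> u =~ g >> v ->
    exists t : Hm q w, (q1 >> t =~ u /\ q2 >> t =~ v) /\
      forall t' : Hm q w, q1 >> t' =~ u -> q2 >> t' =~ v -> t' =~ t.

Record HasPullbacks (C : Cat) := {
  pb_ob : forall a b c (f : Hm a c) (g : Hm b c), Ob C;
  pb_p1 : forall a b c (f : Hm a c) (g : Hm b c), Hm (pb_ob a b c f g) a;
  pb_p2 : forall a b c (f : Hm a c) (g : Hm b c), Hm (pb_ob a b c f g) b;
  pb_spec : forall a b c (f : Hm a c) (g : Hm b c),
      IsPullback f g (pb_p1 a b c f g) (pb_p2 a b c f g)
}.
Arguments pb_ob {_} _ {_ _ _} _ _.
Arguments pb_p1 {_} _ {_ _ _} _ _.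
Arguments pb_p2 {_} _ {_ _ _} _ _.

Record HasPushouts (C : Cat) := {
  po_ob : forall a b c (f : Hm a b) (g : Hm a c), Ob C;
  po_q1 : forall a b c (f : Hm a b) (g : Hm a c), Hm b (po_ob a b c f g);
  po_q2 : forall a b c (f : Hm a b) (g : Hm a c), Hm c (po_ob a b c f g);
  po_spec : forall a b c (f : Hm a b) (g : Hm a c),
      IsPushout f g (po_q1 a b c f g) (po_q2 a b c f g)
}.
Arguments po_ob {_} _ {_ _ _} _ _.
Arguments po_q1 {_} _ {_ _ _} _ _.
Arguments po_q2 {_} _ {_ _ _} _ _.

Definition FactSystem {C : Cat} (E M : MorPred C) : Prop :=
  IsSubcat E /\ IsSubcat M /\ ContainsIsos E /\ ContainsIsos M /\
  (forall a b (f : Hm a b), exists z (e : Hm a z) (m : Hm z b),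
      E _ _ e /\ M _ _ m /\ e >> m =~ f) /\
  (forall x z y x' z' y' (e : Hm x z) (m : Hm z y) (e' : Hm x' z') (m' : Hm z' y')
          (u : Hm x x') (v : Hm y y'),
      E _ _ e -> M _ _ m -> E _ _ e' -> M _ _ m' ->
      (e >> m) >> v =~ u >> (e' >> m') ->
      exists s : Hm z z', (e >> s =~ u >> e' /\ m >> v =~ s >> m') /\
        forall s' : Hm z z', e >> s' =~ u >> e' -> m >> v =~ s' >> m' -> s' =~ s).

Definition Costable {C : Cat} (M : MorPred C) : Prop :=
  forall a b c q (f : Hm a b) (g : Hm a c) (q1 : Hm b q) (q2 : Hm c q),
    IsPushout f g q1 q2 -> (M _ _ f -> M _ _ q2) /\ (M _ _ g -> M _ _ q1).

Definition AllMono {C : Cat} (M : MorPred C) : Prop :=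
  forall a b (m : Hm a b), M a b m -> IsMono m.

Definition PullbackStable {C : Cat} (A : MorPred C) : Prop :=
  forall a b c p (f : Hm a c) (g : Hm b c) (p1 : Hm p a) (p2 : Hm p b),
    IsPullback f g p1 p2 -> (A _ _ g -> A _ _ p1) /\ (A _ _ f -> A _ _ p2).

Definition PbPoCondition {C : Cat} (M A : MorPred C) : Prop :=
  forall x y a (f : Hm x a) (g : Hm y a), A _ _ f -> A _ _ g ->
  forall p (p1 : Hm p x) (p2 : Hm p y), IsPullback f g p1 p2 ->
  forall q (q1 : Hm x q) (q2 : Hm y q), IsPushout p1 p2 q1 q2 ->
  forall u : Hm q a, q1 >> u =~ f -> q2 >> u =~ g -> M _ _ u.

Record cospan (C : Cat) (x y : Ob C) := {
  csp_apex : Ob C; csp_l : Hm x csp_apex; csp_r : Hm y csp_apex }.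
Arguments csp_apex {_ _ _} _.
Arguments csp_l {_ _ _} _.
Arguments csp_r {_ _ _} _.

Record span (C : Cat) (x y : Ob C) := {
  sp_apex : Ob C; sp_l : Hm sp_apex x; sp_r : Hm sp_apex y }.
Arguments sp_apex {_ _ _} _.
Arguments sp_l {_ _ _} _.
Arguments sp_r {_ _ _} _.

Definition cospan_iso {C : Cat} {x y : Ob C} (s t : cospan C x y) : Prop :=
  exists i : Hm (csp_apex s) (csp_apex t),
    IsIso i /\ csp_l s >> i =~ csp_l t /\ csp_r s >> i =~ csp_r t.

Definition span_iso {C : Cat} {x y : Ob C} (s t : span C x y) : Prop :=
  exists i : Hm (sp_apex s) (sp_apex t),
    IsIso i /\ i >> sp_l t =~ sp_l s /\ i >> sp_r t =~ sp_r s.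

Definition cospan_id {C : Cat} (x : Ob C) : cospan C x x :=
  {| csp_apex := x; csp_l := Cid x; csp_r := Cid x |}.

Definition cospan_comp {C : Cat} (po : HasPushouts C) {x y z : Ob C}
  (s : cospan C x y) (t : cospan C y z) : cospan C x z :=
  {| csp_apex := po_ob po (csp_r s) (csp_l t);
     csp_l := csp_l s >> po_q1 po (csp_r s) (csp_l t);
     csp_r := csp_r t >> po_q2 po (csp_r s) (csp_l t) |}.

Definition span_id {C : Cat} (x : Ob C) : span C x x :=
  {| sp_apex := x; sp_l := Cid x; sp_r := Cid x |}.

Definition span_comp {C : Cat} (pb : HasPullbacks C) {x y z : Ob C}
  (s : span C x y) (t : span C y z) : span C x z :=
  {| sp_apex := pb_ob pb (sp_r s) (sp_l t);
     sp_l := pb_p1 pb (sp_r s) (sp_l t) >> sp_l s;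
     sp_r := pb_p2 pb (sp_r s) (sp_l t) >> sp_r t |}.

Definition CospanCat {C : Cat} (po : HasPushouts C) : Cat :=
  {| Ob := Ob C;
     Hm := cospan C;
     Heq := fun x y s t => cospan_iso s t;
     Cid := cospan_id;
     Cmp := fun x y z s t => cospan_comp po s t |}.

Definition corel_step {C : Cat} (M : MorPred C) {x y : Ob C}
  (s t : cospan C x y) : Prop :=
  exists m : Hm (csp_apex s) (csp_apex t),
    M _ _ m /\ csp_l s >> m =~ csp_l t /\ csp_r s >> m =~ csp_r t.

Definition CorelCat {C : Cat} (po : HasPushouts C) (M : MorPred C) : Cat :=
  {| Ob := Ob C;
     Hm := cospan C;
     Heq := fun x y => clos_refl_sym_trans (cospan C x y) (corel_step M);
     Cid := cospan_id;
     Cmp := fun x y z s t => cospan_comp po s t |}.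

Definition spanA {C : Cat} (A : MorPred C) (x y : Ob C) :=
  { s : span C x y | A _ _ (sp_l s) /\ A _ _ (sp_r s) }.

Lemma span_id_A {C : Cat} (A : MorPred C) (hA : IsSubcat A) (x : Ob C) :
  A _ _ (sp_l (span_id x)) /\ A _ _ (sp_r (span_id x)).
Proof. destruct hA as [_ [hid _]]. simpl. split; apply hid. Qed.

Lemma span_comp_A {C : Cat} (pb : HasPullbacks C) (A : MorPred C)
  (hA : IsSubcat A) (hst : PullbackStable A) {x y z : Ob C}
  (s : spanA A x y) (t : spanA A y z) :
  A _ _ (sp_l (span_comp pb (proj1_sig s) (proj1_sig t))) /\
  A _ _ (sp_r (span_comp pb (proj1_sig s) (proj1_sig t))).
Proof.
  destruct s as [s [hs1 hs2]], t as [t [ht1 ht2]]; simpl.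
  destruct hA as [_ [_ hc]].
  destruct (hst _ _ _ _ _ _ _ _ (pb_spec C pb _ _ _ (sp_r s) (sp_l t))) as [H1 H2].
  split; apply hc; auto.
Qed.

Definition SpanACat {C : Cat} (pb : HasPullbacks C) (A : MorPred C)
  (hA : IsSubcat A) (hst : PullbackStable A) : Cat :=
  {| Ob := Ob C;
     Hm := spanA A;
     Heq := fun x y s t => span_iso (proj1_sig s) (proj1_sig t);
     Cid := fun x => exist _ (span_id x) (span_id_A A hA x);
     Cmp := fun x y z s t =>
       exist _ (span_comp pb (proj1_sig s) (proj1_sig t))
               (span_comp_A pb A hA hst s t) |}.

(* words of forward / backward A-arrows, modulo the congruence generated by
   composing consecutive same-direction arrows in A and deleting identities
   (this is the pushout of A and A^op over the discrete category |A|). *)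
Inductive zz {C : Cat} (A : MorPred C) : Ob C -> Ob C -> Type :=
| zz_nil : forall x, zz A x x
| zz_fwd : forall x y z (f : Hm x y), A x y f -> zz A y z -> zz A x z
| zz_bwd : forall x y z (g : Hm y x), A y x g -> zz A y z -> zz A x z.
Arguments zz_nil {_ _} _.
Arguments zz_fwd {_ _ _ _ _} _ _ _.
Arguments zz_bwd {_ _ _ _ _} _ _ _.

Fixpoint zz_app {C : Cat} {A : MorPred C} {x y z : Ob C}
  (w : zz A x y) : zz A y z -> zz A x z :=
  match w in zz _ x0 y0 return zz A y0 z -> zz A x0 z with
  | zz_nil _ => fun v => v
  | zz_fwd f hf w' => fun v => zz_fwd f hf (zz_app w' v)
  | zz_bwd g hg w' => fun v => zz_bwd g hg (zz_app w' v)
  end.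

Inductive zz_red {C : Cat} (A : MorPred C) : forall x y, zz A x y -> zz A x y -> Prop :=
| zr_ff : forall x y z t (f : Hm x y) (g : Hm y z) hf hg (hfg : A _ _ (f >> g))
            (w : zz A z t),
    zz_red A x t (zz_fwd f hf (zz_fwd g hg w)) (zz_fwd (f >> g) hfg w)
| zr_bb : forall x y z t (g : Hm y x) (h : Hm z y) hg hh (hhg : A _ _ (h >> g))
            (w : zz A z t),
    zz_red A x t (zz_bwd g hg (zz_bwd h hh w)) (zz_bwd (h >> g) hhg w)
| zr_fid : forall x t h (w : zz A x t), zz_red A x t (zz_fwd (Cid x) h w) w
| zr_bid : forall x t h (w : zz A x t), zz_red A x t (zz_bwd (Cid x) h w) w
| zr_fcong : forall x y t (f f' : Hm x y) hf hf' (w : zz A y t),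
    f =~ f' -> zz_red A x t (zz_fwd f hf w) (zz_fwd f' hf' w)
| zr_bcong : forall x y t (g g' : Hm y x) hg hg' (w : zz A y t),
    g =~ g' -> zz_red A x t (zz_bwd g hg w) (zz_bwd g' hg' w)
| zr_fctx : forall x y t (f : Hm x y) hf (w w' : zz A y t),
    zz_red A y t w w' -> zz_red A x t (zz_fwd f hf w) (zz_fwd f hf w')
| zr_bctx : forall x y t (g : Hm y x) hg (w w' : zz A y t),
    zz_red A y t w w' -> zz_red A x t (zz_bwd g hg w) (zz_bwd g hg w').

Definition ZZCat {C : Cat} (A : MorPred C) : Cat :=
  {| Ob := Ob C;
     Hm := zz A;
     Heq := fun x y => clos_refl_sym_trans (zz A x y) (zz_red A x y);
     Cid := fun x => zz_nil x;
     Cmp := fun x y z w v => zz_app w v |}.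

Fixpoint zz_to_span {C : Cat} (pb : HasPullbacks C) (A : MorPred C)
  (hA : IsSubcat A) (hst : PullbackStable A) {x y : Ob C} (w : zz A x y)
  : Hm (c0 := SpanACat pb A hA hst) x y :=
  match w in zz _ x0 y0 return Hm (c0 := SpanACat pb A hA hst) x0 y0 with
  | zz_nil x0 => Cid (c0 := SpanACat pb A hA hst) x0
  | @zz_fwd _ _ x0 y0 _ f hf w' =>
      Cmp (c0 := SpanACat pb A hA hst)
        (exist _ {| sp_apex := x0; sp_l := Cid x0; sp_r := f |}
           (conj (proj1 (proj2 hA) x0) hf))
        (zz_to_span pb A hA hst w')
  | @zz_bwd _ _ x0 y0 _ g hg w' =>
      Cmp (c0 := SpanACat pb A hA hst)
        (exist _ {| sp_apex := y0; sp_l := g; sp_r := Cid y0 |}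
           (conj hg (proj1 (proj2 hA) y0)))
        (zz_to_span pb A hA hst w')
  end.

Fixpoint zz_to_cospan {C : Cat} (po : HasPushouts C) (A : MorPred C)
  {x y : Ob C} (w : zz A x y) : cospan C x y :=
  match w in zz _ x0 y0 return cospan C x0 y0 with
  | zz_nil x0 => cospan_id x0
  | @zz_fwd _ _ x0 y0 _ f hf w' =>
      cospan_comp po {| csp_apex := y0; csp_l := f; csp_r := Cid y0 |}
                     (zz_to_cospan po A w')
  | @zz_bwd _ _ x0 y0 _ g hg w' =>
      cospan_comp po {| csp_apex := x0; csp_l := Cid x0; csp_r := g |}
                     (zz_to_cospan po A w')
  end.

Definition ZZtoSpan {C : Cat} (pb : HasPullbacks C) (A : MorPred C)
  (hA : IsSubcat A) (hst : PullbackStable A)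
  : Functor (ZZCat A) (SpanACat pb A hA hst) :=
  @Build_Functor (ZZCat A) (SpanACat pb A hA hst) (fun x => x)
    (fun (x y : C) (w : zz A x y) => zz_to_span pb A hA hst w).

Definition ZZtoCospan {C : Cat} (po : HasPushouts C) (A : MorPred C)
  : Functor (ZZCat A) (CospanCat po) :=
  @Build_Functor (ZZCat A) (CospanCat po) (fun x => x)
    (fun (x y : C) (w : zz A x y) => zz_to_cospan po A w).

Definition PiF {C : Cat} (pb : HasPullbacks C) (po : HasPushouts C)
  (M A : MorPred C) (hA : IsSubcat A) (hst : PullbackStable A)
  : Functor (SpanACat pb A hA hst) (CorelCat po M) :=
  @Build_Functor (SpanACat pb A hA hst) (CorelCat po M) (fun x => x)
     (fun (x y : C) (s : spanA A x y) =>
       let s0 := proj1_sig s in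
       {| csp_apex := po_ob po (sp_l s0) (sp_r s0);
          csp_l := po_q1 po (sp_l s0) (sp_r s0);
          csp_r := po_q2 po (sp_l s0) (sp_r s0) |} : cospan C x y).

Definition GammaF {C : Cat} (po : HasPushouts C) (M : MorPred C)
  : Functor (CospanCat po) (CorelCat po M) :=
  @Build_Functor (CospanCat po) (CorelCat po M) (fun x => x)
    (fun (x y : C) (s : cospan C x y) => s).

(* Main.v *)
Require Import Defs.
From Stdlib Require Import Relations Setoid Morphisms.

Existing Class IsCategory.

Section Basics.
Context {C : Cat} {hC : IsCategory C}.

Global Instance heq_Equiv (a b : C) : Equivalence (@Heq C a b).
Proof. destruct hC as [H _]. destruct (H a b) as [r [t s]]. split; auto.
 Qed.

Global Instance cmp_Proper (a b c : C) : Proper (Heq ==> Heq ==> Heq) (@Cmp C a b c).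
Proof. destruct hC as [_ [H _]]. intros f f' Hf g g' Hg. apply H; auto. Qed.

Lemma cid_l (a b : C) (f : Hm a b) : Cid a >> f =~ f.
Proof. destruct hC as [_ [_ [H _]]]. apply H. Qed.
Lemma cid_r (a b : C) (f : Hm a b) : f >> Cid b =~ f.
Proof. destruct hC as [_ [_ [_ [H _]]]]. apply H. Qed.
Lemma cassoc (a b c d : C) (f : Hm a b) (g : Hm b c) (h : Hm c d) :
  (f >> g) >> h =~ f >> (g >> h).
Proof. destruct hC as [_ [_ [_ [_ H]]]]. apply H. Qed.

End Basics.
Arguments cid_l {C hC a b} f.
Arguments cid_r {C hC a b} f.
Arguments cassoc {C hC a b c d} f g h.

Ltac norm := repeat (rewrite ?cassoc, ?cid_l, ?cid_r).

Section Pushouts.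
Context {C : Cat} {hC : IsCategory C}.

Lemma po_epi {a b c q : C} (f : Hm a b) (g : Hm a c) q1 q2 :
  @IsPushout C a b c q f g q1 q2 ->
  forall w (x y : Hm q w), q1 >> x =~ q1 >> y -> q2 >> x =~ q2 >> y -> x =~ y.
Proof.
  intros [Hc Hu] w x y H1 H2.
  destruct (Hu w (q1 >> x) (q2 >> x)) as [t [[T1 T2] Tu]].
  - rewrite <- !cassoc, Hc. reflexivity.
  - rewrite (Tu x) by reflexivity. symmetry. apply Tu; symmetry; auto.
Qed.

Lemma po_resp {a b c q : C} (f f' : Hm a b) (g g' : Hm a c) q1 q1' q2 q2' :
  f =~ f' -> g =~ g' -> q1 =~ q1' -> q2 =~ q2' ->
  @IsPushout C a b c q f g q1 q2 -> IsPushout f' g' q1' q2'.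
Proof.
  intros Ef Eg E1 E2 [Hc Hu]. split.
  - rewrite <- Ef, <- Eg, <- E1, <- E2; auto.
  - intros w u v H. destruct (Hu w u v) as [t [[T1 T2] Tu]].
    + rewrite Ef, Eg; auto.
    + exists t. split. split; rewrite <- ?E1, <- ?E2; auto.
      intros t' H1 H2. apply Tu; rewrite ?E1, ?E2; auto.
Qed.

Lemma po_sym {a b c q : C} (f : Hm a b) (g : Hm a c) q1 q2 :
  @IsPushout C a b c q f g q1 q2 -> IsPushout g f q2 q1.
Proof.
  intros [Hc Hu]. split. symmetry; auto.
  intros w u v H. destruct (Hu w v u) as [t [[T1 T2] Tu]]. symmetry; auto.
  exists t. split. split; auto. intros t' H1 H2; apply Tu; auto.
Qed.

Lemma po_uniq {a b c q r : C} (f : Hm a b) (g : Hm a c) q1 q2 (r1 : Hm b r) r2 :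
  @IsPushout C a b c q f g q1 q2 -> IsPushout f g r1 r2 ->
  exists i : Hm q r, IsIso i /\ q1 >> i =~ r1 /\ q2 >> i =~ r2.
Proof.
  intros Pq Pr. pose proof Pq as [Hq Uq]. pose proof Pr as [Hr Ur].
  destruct (Uq r r1 r2 Hr) as [i [[I1 I2] _]].
  destruct (Ur q q1 q2 Hq) as [j [[J1 J2] _]].
  exists i. split; [|split; auto].
  exists j. split.
  - apply (po_epi _ _ _ _ Pq); rewrite <- cassoc; repeat (rewrite I1 || rewrite I2 || rewrite J1 || rewrite J2); rewrite cid_r; reflexivity.
  - apply (po_epi _ _ _ _ Pr); rewrite <- cassoc; repeat (rewrite I1 || rewrite I2 || rewrite J1 || rewrite J2); rewrite cid_r; reflexivity.
Qed.

Lemma po_id {a c : C} (g : Hm a c) : IsPushout (Cid a) g g (Cid c).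
Proof.
  split. norm; reflexivity.
  intros w u v H. exists v. split. split. rewrite cid_l in H; symmetry; auto. apply cid_l.
  intros t' H1 H2. rewrite cid_l in H2; auto.
Qed.

Lemma iso_inv {a b : C} (i : Hm a b) : IsIso i -> exists j, IsIso j /\ i >> j =~ Cid a /\ j >> i =~ Cid b.
Proof. intros [j [H1 H2]]. exists j. split; auto. exists i; auto. Qed.

Lemma iso_id (a : C) : IsIso (Cid a).
Proof. exists (Cid a). split; apply cid_l. Qed.

Lemma iso_comp {a b c : C} (i : Hm a b) (j : Hm b c) : IsIso i -> IsIso j -> IsIso (i >> j).
Proof.
  intros [i' [I1 I2]] [j' [J1 J2]]. exists (j' >> i'). split.
  - rewrite cassoc, <- (cassoc j j' i'), J1, cid_l; auto.
  - rewrite cassoc, <- (cassoc i' i j), I2, cid_l; auto.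
Qed.

Lemma po_of_iso {a b c q : C} (f : Hm a b) (g : Hm a c) q1 q2 :
  @IsPushout C a b c q f g q1 q2 -> IsIso g -> IsIso q1.
Proof.
  intros P [g' [G1 G2]]. pose proof P as [Hc Hu].
  destruct (Hu b (Cid b) (g' >> f)) as [t [[T1 T2] _]].
  { rewrite <- cassoc, G1. norm. reflexivity. }
  exists t. split; auto.
  apply (po_epi _ _ _ _ P).
  - rewrite <- cassoc, T1. norm. reflexivity.
  - rewrite <- cassoc, T2, cassoc, Hc, <- cassoc, G2. norm. reflexivity.
Qed.

Lemma po_paste {a b c d q r : C} (f : Hm a b) (g : Hm a c) (q1 : Hm b q) (q2 : Hm c q)
  (h : Hm b d) (r1 : Hm q r) (r2 : Hm d r) :
  IsPushout f g q1 q2 -> IsPushout q1 h r1 r2 -> IsPushout (f >> h) g r2 (q2 >> r1).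
Proof.
  intros [Hq Uq] [Hr Ur]. split.
  - rewrite cassoc, <- Hr, <- !cassoc, Hq. reflexivity.
  - intros w u v H.
    destruct (Uq w (h >> u) v) as [t1 [[T1 T2] Tu1]]. { rewrite <- cassoc; auto. }
    destruct (Ur w t1 u) as [t2 [[S1 S2] Su]]. { auto. }
    exists t2. split. split; auto. rewrite cassoc, S1; auto.
    intros t' H1 H2. apply Su; auto. apply Tu1.
    + rewrite <- cassoc, Hr, cassoc, H1. reflexivity.
    + rewrite <- cassoc; auto.
Qed.

Lemma po_cancel {a b c d q r : C} (f : Hm a b) (g : Hm a c) (q1 : Hm b q) (q2 : Hm c q)
  (h : Hm b d) (r1 : Hm d r) (r2 : Hm c r) (n : Hm q r) :
  IsPushout f g q1 q2 -> IsPushout (f >> h) g r1 r2 ->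
  q1 >> n =~ h >> r1 -> q2 >> n =~ r2 -> IsPushout q1 h n r1.
Proof.
  intros Pq Pr N1 N2. pose proof Pq as [Hq Uq]. pose proof Pr as [Hr Ur]. split; auto.
  intros w x y H.
  destruct (Ur w y (q2 >> x)) as [t [[T1 T2] Tu]].
  { rewrite cassoc, <- H, <- !cassoc, Hq. reflexivity. }
  exists t. split. split; auto.
  - apply (po_epi _ _ _ _ Pq).
    + rewrite <- cassoc, N1, cassoc, T1, H; reflexivity.
    + rewrite <- cassoc, N2, T2. reflexivity.
  - intros t' H1 H2. apply Tu; auto.
    rewrite <- N2, cassoc, H1. reflexivity.
Qed.

Lemma po_induced {a b c d q r : C} (f : Hm a b) (g : Hm a c) (q1 : Hm b q) (q2 : Hm c q)
  (h : Hm b d) (r1 : Hm d r) (r2 : Hm c r) :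
  IsPushout f g q1 q2 -> (f >> h) >> r1 =~ g >> r2 ->
  exists n, q1 >> n =~ h >> r1 /\ q2 >> n =~ r2.
Proof.
  intros [Hq Uq] H. destruct (Uq r (h >> r1) r2) as [n [[N1 N2] _]].
  rewrite <- cassoc; auto. exists n; auto.
Qed.

Lemma po_iso_pre {a a' b c q : C} (i : Hm a' a) (f : Hm a b) (g : Hm a c) q1 q2 :
  IsIso i -> @IsPushout C a b c q f g q1 q2 -> IsPushout (i >> f) (i >> g) q1 q2.
Proof.
  intros [j [J1 J2]] [Hc Hu]. split. rewrite !cassoc, Hc; reflexivity.
  intros w u v H. apply Hu.
  rewrite <- (cid_l f), <- (cid_l g), <- J2, !cassoc, <- (cassoc i f u), <- (cassoc i g v), H. reflexivity.
Qed.

End Pushouts.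

Definition Cop (C : Cat) : Cat :=
  {| Ob := Ob C; Hm := fun a b => @Hm C b a;
     Heq := fun a b f g => @Heq C b a f g;
     Cid := fun a => @Cid C a;
     Cmp := fun a b c f g => @Cmp C c b a g f |}.

Global Instance Cop_cat {C : Cat} {hC : IsCategory C} : IsCategory (Cop C).
Proof.
  split; [|split; [|split; [|split]]]; simpl.
  - intros a b. split; [|split].
    + intro; reflexivity.
    + intros x y z H1 H2; simpl in *; rewrite H1; auto.
    + intros x y H; simpl in *; symmetry; auto.
  - intros a b c f f' g g' Hf Hg. rewrite Hf, Hg; reflexivity.
  - intros; apply cid_r.
  - intros; apply cid_l.
  - intros; symmetry; apply cassoc.
Qed.

Definition po_of_pb {C : Cat} (pb : HasPullbacks C) : HasPushouts (Cop C).
Proof.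
  refine {| po_ob := fun (a b c : Cop C) (f : @Hm (Cop C) a b) (g : @Hm (Cop C) a c) => @pb_ob C pb b c a f g;
     po_q1 := fun (a b c : Cop C) (f : @Hm (Cop C) a b) (g : @Hm (Cop C) a c) => @pb_p1 C pb b c a f g;
     po_q2 := fun (a b c : Cop C) (f : @Hm (Cop C) a b) (g : @Hm (Cop C) a c) => @pb_p2 C pb b c a f g;
     po_spec := fun (a b c : Cop C) (f : @Hm (Cop C) a b) (g : @Hm (Cop C) a c) => pb_spec C pb b c a f g |}.
Defined.

Lemma iso_op {C : Cat} {a b : C} (i : @Hm C a b) : IsIso i -> @IsIso (Cop C) b a i.
Proof. intros [j [H1 H2]]. exists j; split; auto. Qed.
Lemma iso_unop {C : Cat} {a b : C} (i : @Hm C a b) : @IsIso (Cop C) b a i -> IsIso i.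
Proof. intros [j [H1 H2]]. exists j; split; auto. Qed.

Section Cospans.
Context {C : Cat} {hC : IsCategory C} (po : HasPushouts C).

Lemma ciso_refl {x y : C} (s : cospan C x y) : cospan_iso s s.
Proof. exists (Cid _). split. apply iso_id. split; apply cid_r. Qed.

Lemma ciso_sym {x y : C} (s t : cospan C x y) : cospan_iso s t -> cospan_iso t s.
Proof.
  intros [i [Hi [H1 H2]]]. destruct (iso_inv i Hi) as [j [Hj [J1 J2]]].
  exists j. split; auto. split.
  - rewrite <- H1, cassoc, J1; apply cid_r.
  - rewrite <- H2, cassoc, J1; apply cid_r.
Qed.

Lemma ciso_trans {x y : C} (s t u : cospan C x y) :
  cospan_iso s t -> cospan_iso t u -> cospan_iso s u.
Proof.
  intros [i [Hi [H1 H2]]] [j [Hj [J1 J2]]]. exists (i >> j). split. apply iso_comp; auto.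
  split; rewrite <- cassoc; [rewrite H1 | rewrite H2]; auto.
Qed.

Lemma ciso_legs {x y N : C} (f f' : Hm x N) (g g' : Hm y N) : f =~ f' -> g =~ g' ->
  cospan_iso {| csp_apex := N; csp_l := f; csp_r := g |}
             {| csp_apex := N; csp_l := f'; csp_r := g' |}.
Proof. intros. exists (Cid N). split. apply iso_id. simpl. rewrite !cid_r. auto. Qed.

Lemma cospan_comp_map_l {x y z : C} (s s' : cospan C x y) (t : cospan C y z)
  (m : Hm (csp_apex s) (csp_apex s')) :
  csp_l s >> m =~ csp_l s' -> csp_r s >> m =~ csp_r s' ->
  exists n, IsPushout (po_q1 po (csp_r s) (csp_l t)) m n (po_q1 po (csp_r s') (csp_l t)) /\
    csp_l (cospan_comp po s t) >> n =~ csp_l (cospan_comp po s' t) /\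
    csp_r (cospan_comp po s t) >> n =~ csp_r (cospan_comp po s' t).
Proof.
  intros Hl Hr. simpl.
  pose proof (po_spec C po _ _ _ (csp_r s) (csp_l t)) as Pq.
  pose proof (po_spec C po _ _ _ (csp_r s') (csp_l t)) as Pr.
  assert (Pr' : IsPushout (csp_r s >> m) (csp_l t) (po_q1 po (csp_r s') (csp_l t))
                  (po_q2 po (csp_r s') (csp_l t))).
  { eapply po_resp; [symmetry; exact Hr|reflexivity|reflexivity|reflexivity|exact Pr]. }
  destruct (po_induced _ _ _ _ m _ _ Pq (proj1 Pr')) as [n [N1 N2]].
  exists n. split. eapply po_cancel; eauto.
  split.
  - rewrite cassoc, N1, <- cassoc, Hl. reflexivity.
  - rewrite cassoc, N2. reflexivity.
Qed.

Lemma cospan_comp_map_r {x y z : C} (s : cospan C x y) (t t' : cospan C y z)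
  (m : Hm (csp_apex t) (csp_apex t')) :
  csp_l t >> m =~ csp_l t' -> csp_r t >> m =~ csp_r t' ->
  exists n, IsPushout (po_q2 po (csp_r s) (csp_l t)) m n (po_q2 po (csp_r s) (csp_l t')) /\
    csp_l (cospan_comp po s t) >> n =~ csp_l (cospan_comp po s t') /\
    csp_r (cospan_comp po s t) >> n =~ csp_r (cospan_comp po s t').
Proof.
  intros Hl Hr. simpl.
  pose proof (po_sym _ _ _ _ (po_spec C po _ _ _ (csp_r s) (csp_l t))) as Pq.
  pose proof (po_sym _ _ _ _ (po_spec C po _ _ _ (csp_r s) (csp_l t'))) as Pr.
  assert (Pr' : IsPushout (csp_l t >> m) (csp_r s) (po_q2 po (csp_r s) (csp_l t'))
                  (po_q1 po (csp_r s) (csp_l t'))).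
  { eapply po_resp; [symmetry; exact Hl|reflexivity|reflexivity|reflexivity|exact Pr]. }
  destruct (po_induced _ _ _ _ m _ _ Pq (proj1 Pr')) as [n [N1 N2]].
  exists n. split. eapply po_cancel; eauto.
  split.
  - rewrite cassoc, N2. reflexivity.
  - rewrite cassoc, N1, <- cassoc, Hr. reflexivity.
Qed.

Lemma ciso_comp {x y z : C} (s s' : cospan C x y) (t t' : cospan C y z) :
  cospan_iso s s' -> cospan_iso t t' -> cospan_iso (cospan_comp po s t) (cospan_comp po s' t').
Proof.
  intros [i [Hi [I1 I2]]] [j [Hj [J1 J2]]].
  apply (ciso_trans _ (cospan_comp po s' t)).
  - destruct (cospan_comp_map_l s s' t i I1 I2) as [n [Pn [N1 N2]]].
    exists n. split; [|split; auto]. eapply po_of_iso; eauto.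
  - destruct (cospan_comp_map_r s' t t' j J1 J2) as [n [Pn [N1 N2]]].
    exists n. split; [|split; auto]. eapply po_of_iso; eauto.
Qed.

Lemma cospan_fl {x y z : C} (f : Hm x y) (t : cospan C y z) :
  cospan_iso (cospan_comp po {| csp_apex := y; csp_l := f; csp_r := Cid y |} t)
             {| csp_apex := csp_apex t; csp_l := f >> csp_l t; csp_r := csp_r t |}.
Proof.
  simpl. destruct (po_uniq _ _ _ _ _ _ (po_spec C po _ _ _ (Cid y) (csp_l t)) (po_id (csp_l t)))
    as [i [Hi [I1 I2]]].
  exists i. split; auto. simpl. split.
  - rewrite cassoc, I1. reflexivity.
  - rewrite cassoc, I2, cid_r. reflexivity.
Qed.

Lemma cospan_fr {x y z : C} (s : cospan C x y) (g : Hm z y) :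
  cospan_iso (cospan_comp po s {| csp_apex := y; csp_l := Cid y; csp_r := g |})
             {| csp_apex := csp_apex s; csp_l := csp_l s; csp_r := g >> csp_r s |}.
Proof.
  simpl. destruct (po_uniq _ _ _ _ _ _ (po_spec C po _ _ _ (csp_r s) (Cid y))
     (po_sym _ _ _ _ (po_id (csp_r s)))) as [i [Hi [I1 I2]]].
  exists i. split; auto. simpl. split.
  - rewrite cassoc, I1, cid_r. reflexivity.
  - rewrite cassoc, I2. reflexivity.
Qed.

Lemma cospan_id_l {x y : C} (s : cospan C x y) : cospan_iso (cospan_comp po (cospan_id x) s) s.
Proof.
  eapply ciso_trans. apply (cospan_fl (Cid x) s).
  destruct s; simpl. apply ciso_legs; [apply cid_l|reflexivity].
Qed.

Lemma cospan_id_r {x y : C} (s : cospan C x y) : cospan_iso (cospan_comp po s (cospan_id y)) s.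
Proof.
  eapply ciso_trans. apply (cospan_fr s (Cid y)).
  destruct s; simpl. apply ciso_legs; [reflexivity|apply cid_l].
Qed.

Lemma cospan_assoc {x y z w : C} (s : cospan C x y) (t : cospan C y z) (u : cospan C z w) :
  cospan_iso (cospan_comp po (cospan_comp po s t) u) (cospan_comp po s (cospan_comp po t u)).
Proof.
  pose proof (po_spec C po _ _ _ (csp_r s) (csp_l t)) as P.
  pose proof (po_spec C po _ _ _ (csp_r t) (csp_l u)) as P'.
  set (q1 := po_q1 po (csp_r s) (csp_l t)) in *.
  set (q2 := po_q2 po (csp_r s) (csp_l t)) in *.
  set (q1' := po_q1 po (csp_r t) (csp_l u)) in *.
  set (q2' := po_q2 po (csp_r t) (csp_l u)) in *.
  pose proof (po_spec C po _ _ _ q2 q1') as R.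
  set (p1 := po_q1 po q2 q1') in *. set (p2 := po_q2 po q2 q1') in *.
  assert (FA : IsPushout (csp_r t >> q2) (csp_l u) p1 (q2' >> p2)).
  { apply (po_paste _ _ q1' q2' q2 p2 p1 P'). apply po_sym; auto. }
  assert (FB : IsPushout (csp_r s) (csp_l t >> q1') (q1 >> p1) p2).
  { apply po_sym. apply (po_paste _ _ q2 q1 q1' p1 p2 (po_sym _ _ _ _ P)). auto. }
  set (RR := {| csp_apex := po_ob po q2 q1'; csp_l := csp_l s >> (q1 >> p1);
                csp_r := csp_r u >> (q2' >> p2) |} : cospan C x w).
  apply (ciso_trans _ RR).
  - destruct (po_uniq _ _ _ _ _ _ (po_spec C po _ _ _ (csp_r (cospan_comp po s t)) (csp_l u)) FA)
      as [i [Hi [I1 I2]]].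
    exists i. split; auto. cbn [csp_r csp_l csp_apex cospan_comp] in I1, I2 |- *. fold q1 q2 in I1, I2 |- *. split.
    + rewrite !cassoc. apply cmp_Proper; [reflexivity|]. apply cmp_Proper; [reflexivity|]. exact I1.
    + rewrite cassoc. apply cmp_Proper; [reflexivity|]. exact I2.
  - apply ciso_sym.
    destruct (po_uniq _ _ _ _ _ _ (po_spec C po _ _ _ (csp_r s) (csp_l (cospan_comp po t u))) FB)
      as [i [Hi [I1 I2]]].
    exists i. split; auto. cbn [csp_r csp_l csp_apex cospan_comp] in I1, I2 |- *. fold q1' q2' in I1, I2 |- *. split.
    + rewrite cassoc. apply cmp_Proper; [reflexivity|]. exact I1.
    + rewrite !cassoc. apply cmp_Proper; [reflexivity|]. apply cmp_Proper; [reflexivity|]. exact I2.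
Qed.

End Cospans.

Section Corel.
Context {C : Cat} {hC : IsCategory C} (po : HasPushouts C) (M : MorPred C)
  (hMiso : ContainsIsos M) (hcost : Costable M).

Definition corel_eq {x y : C} := clos_refl_sym_trans (cospan C x y) (@corel_step C M x y).

Lemma corel_of_iso {x y : C} (s t : cospan C x y) : cospan_iso s t -> corel_eq s t.
Proof.
  intros [i [Hi [H1 H2]]]. apply rst_step. exists i. split; auto.
Qed.

Lemma corel_refl {x y : C} (s : cospan C x y) : corel_eq s s.
Proof. apply rst_refl. Qed.
Lemma corel_sym {x y : C} (s t : cospan C x y) : corel_eq s t -> corel_eq t s.
Proof. apply rst_sym. Qed.
Lemma corel_trans {x y : C} (s t u : cospan C x y) : corel_eq s t -> corel_eq t u -> corel_eq s u.
Proof. apply rst_trans. Qed.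

Lemma corel_comp_l {x y z : C} (s s' : cospan C x y) (t : cospan C y z) :
  corel_eq s s' -> corel_eq (cospan_comp po s t) (cospan_comp po s' t).
Proof.
  induction 1.
  - destruct H as [m [Hm [H1 H2]]].
    destruct (cospan_comp_map_l po x0 y0 t m H1 H2) as [n [Pn [N1 N2]]].
    apply rst_step. exists n. split; auto.
    apply (proj2 (hcost _ _ _ _ _ _ _ _ Pn)); auto.
  - apply rst_refl.
  - apply rst_sym; auto.
  - eapply rst_trans; eauto.
Qed.

Lemma corel_comp_r {x y z : C} (s : cospan C x y) (t t' : cospan C y z) :
  corel_eq t t' -> corel_eq (cospan_comp po s t) (cospan_comp po s t').
Proof.
  induction 1.
  - destruct H as [m [Hm [H1 H2]]].
    destruct (cospan_comp_map_r po s x0 y0 m H1 H2) as [n [Pn [N1 N2]]].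
    apply rst_step. exists n. split; auto.
    apply (proj2 (hcost _ _ _ _ _ _ _ _ Pn)); auto.
  - apply rst_refl.
  - apply rst_sym; auto.
  - eapply rst_trans; eauto.
Qed.

Lemma corel_comp {x y z : C} (s s' : cospan C x y) (t t' : cospan C y z) :
  corel_eq s s' -> corel_eq t t' -> corel_eq (cospan_comp po s t) (cospan_comp po s' t').
Proof.
  intros. eapply corel_trans. apply corel_comp_l; eauto. apply corel_comp_r; auto.
Qed.

Lemma Corel_cat : IsCategory (CorelCat po M).
Proof.
  split; [|split; [|split; [|split]]]; simpl.
  - intros a b. split; [|split].
    + intro; apply rst_refl.
    + intros x y z; apply rst_trans.
    + intros x y; apply rst_sym.
  - intros. apply corel_comp; auto.
  - intros. apply corel_of_iso, cospan_id_l.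
  - intros. apply corel_of_iso, cospan_id_r.
  - intros. apply corel_of_iso, cospan_assoc.
Qed.

End Corel.

Lemma Cospan_cat {C : Cat} {hC : IsCategory C} (po : HasPushouts C) : IsCategory (CospanCat po).
Proof.
  split; [|split; [|split; [|split]]]; simpl.
  - intros a b. split; [|split].
    + intro; apply ciso_refl.
    + intros x y z; apply ciso_trans.
    + intros x y; apply ciso_sym.
  - intros. apply ciso_comp; auto.
  - intros. apply cospan_id_l.
  - intros. apply cospan_id_r.
  - intros. apply cospan_assoc.
Qed.

Definition toCsp {C : Cat} {x y : C} (s : span C x y) : @cospan (Cop C) x y :=
  @Build_cospan (Cop C) x y (sp_apex s) (sp_l s) (sp_r s).

Section Spans.
Context {C : Cat} {hC : IsCategory C} (pb : HasPullbacks C).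

Lemma toCsp_comp {x y z : C} (s : span C x y) (t : span C y z) :
  toCsp (span_comp pb s t) = cospan_comp (po_of_pb pb) (toCsp s) (toCsp t).
Proof. reflexivity. Qed.

Lemma siso_of_op {x y : C} (s t : span C x y) :
  @cospan_iso (Cop C) x y (toCsp t) (toCsp s) -> span_iso s t.
Proof. intros [i [Hi [H1 H2]]]. exists i. split; [apply iso_unop; auto|split; auto]. Qed.

Lemma siso_to_op {x y : C} (s t : span C x y) :
  span_iso s t -> @cospan_iso (Cop C) x y (toCsp t) (toCsp s).
Proof. intros [i [Hi [H1 H2]]]. exists i. split; [apply iso_op; auto|split; auto]. Qed.

Lemma siso_refl {x y : C} (s : span C x y) : span_iso s s.
Proof. apply siso_of_op, ciso_refl. Qed.
Lemma siso_sym {x y : C} (s t : span C x y) : span_iso s t -> span_iso t s.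
Proof. intro H. apply siso_of_op, ciso_sym, siso_to_op; auto. Qed.
Lemma siso_trans {x y : C} (s t u : span C x y) : span_iso s t -> span_iso t u -> span_iso s u.
Proof.
  intros H1 H2. apply siso_of_op. eapply ciso_trans; apply siso_to_op; eauto.
Qed.

Lemma siso_comp {x y z : C} (s s' : span C x y) (t t' : span C y z) :
  span_iso s s' -> span_iso t t' -> span_iso (span_comp pb s t) (span_comp pb s' t').
Proof.
  intros H1 H2. apply siso_of_op. rewrite !toCsp_comp.
  apply ciso_comp; apply siso_to_op; auto.
Qed.

Lemma span_id_l {x y : C} (s : span C x y) : span_iso (span_comp pb (span_id x) s) s.
Proof. apply siso_sym, siso_of_op. rewrite toCsp_comp. apply (cospan_id_l (po_of_pb pb)). Qed.
Lemma span_id_r {x y : C} (s : span C x y) : span_iso (span_comp pb s (span_id y)) s.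
Proof. apply siso_sym, siso_of_op. rewrite toCsp_comp. apply (cospan_id_r (po_of_pb pb)). Qed.
Lemma span_assoc {x y z w : C} (s : span C x y) (t : span C y z) (u : span C z w) :
  span_iso (span_comp pb (span_comp pb s t) u) (span_comp pb s (span_comp pb t u)).
Proof.
  apply siso_sym, siso_of_op. rewrite !toCsp_comp. apply (cospan_assoc (po_of_pb pb)).
Qed.

Lemma span_fl {x y z : C} (f : Hm y x) (t : span C y z) :
  span_iso (span_comp pb {| sp_apex := y; sp_l := f; sp_r := Cid y |} t)
           {| sp_apex := sp_apex t; sp_l := sp_l t >> f; sp_r := sp_r t |}.
Proof.
  apply siso_sym, siso_of_op. rewrite toCsp_comp.
  apply (cospan_fl (po_of_pb pb) (x := x) (y := y) f (toCsp t)).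
Qed.

Lemma span_fr {x y z : C} (s : span C x y) (g : Hm y z) :
  span_iso (span_comp pb s {| sp_apex := y; sp_l := Cid y; sp_r := g |})
           {| sp_apex := sp_apex s; sp_l := sp_l s; sp_r := sp_r s >> g |}.
Proof.
  apply siso_sym, siso_of_op. rewrite toCsp_comp.
  apply (cospan_fr (po_of_pb pb) (x := x) (y := y) (z := z) (toCsp s) g).
Qed.

Lemma siso_legs {x y N : C} (f f' : Hm N x) (g g' : Hm N y) : f =~ f' -> g =~ g' ->
  span_iso {| sp_apex := N; sp_l := f; sp_r := g |}
           {| sp_apex := N; sp_l := f'; sp_r := g' |}.
Proof. intros. exists (Cid N). split. apply iso_id. simpl. rewrite !cid_l. split; symmetry; auto. Qed.

Lemma SpanA_cat (A : MorPred C) (hA : IsSubcat A) (hst : PullbackStable A) :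
  IsCategory (SpanACat pb A hA hst).
Proof.
  split; [|split; [|split; [|split]]]; simpl.
  - intros a b. split; [|split].
    + intro; apply siso_refl.
    + intros x y z; apply siso_trans.
    + intros x y; apply siso_sym.
  - intros. apply siso_comp; auto.
  - intros. apply span_id_l.
  - intros. apply span_id_r.
  - intros. apply span_assoc.
Qed.

End Spans.

Section ZZ.
Context {C : Cat} {hC : IsCategory C} (A : MorPred C).

Lemma zz_app_nil_r {x y : C} (w : zz A x y) : zz_app w (zz_nil y) = w.
Proof. induction w; simpl; f_equal; auto. Qed.

Lemma zz_app_assoc {x y z t : C} (w : zz A x y) (v : zz A y z) (u : zz A z t) :
  zz_app (zz_app w v) u = zz_app w (zz_app v u).
Proof. induction w; simpl; f_equal; auto. Qed.

Definition zz_eq {x y : C} := clos_refl_sym_trans (zz A x y) (zz_red A x y).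

Lemma zz_red_app_l {x y z : C} (w w' : zz A x y) (v : zz A y z) :
  zz_red A x y w w' -> zz_red A x z (zz_app w v) (zz_app w' v).
Proof.
  induction 1; simpl; try (constructor; auto; fail).
Qed.

Lemma zz_eq_app_l {x y z : C} (w w' : zz A x y) (v : zz A y z) :
  zz_eq w w' -> zz_eq (zz_app w v) (zz_app w' v).
Proof.
  induction 1.
  - apply rst_step, zz_red_app_l; auto.
  - apply rst_refl.
  - apply rst_sym; auto.
  - eapply rst_trans; eauto.
Qed.

Lemma zz_eq_fwd {x y z : C} (f : Hm x y) hf (w w' : zz A y z) :
  zz_eq w w' -> zz_eq (zz_fwd f hf w) (zz_fwd f hf w').
Proof.
  induction 1.
  - apply rst_step; constructor; auto.
  - apply rst_refl.
  - apply rst_sym; auto.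
  - eapply rst_trans; eauto.
Qed.

Lemma zz_eq_bwd {x y z : C} (g : Hm y x) hg (w w' : zz A y z) :
  zz_eq w w' -> zz_eq (zz_bwd g hg w) (zz_bwd g hg w').
Proof.
  induction 1.
  - apply rst_step; constructor; auto.
  - apply rst_refl.
  - apply rst_sym; auto.
  - eapply rst_trans; eauto.
Qed.

Lemma zz_eq_app_r {x y z : C} (w : zz A x y) (v v' : zz A y z) :
  zz_eq v v' -> zz_eq (zz_app w v) (zz_app w v').
Proof.
  intro H. induction w; simpl; auto.
  - apply zz_eq_fwd; auto.
  - apply zz_eq_bwd; auto.
Qed.

Lemma ZZ_cat : IsCategory (ZZCat A).
Proof.
  split; [|split; [|split; [|split]]]; simpl.
  - intros a b. split; [|split].
    + intro; apply rst_refl.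
    + intros x y z; apply rst_trans.
    + intros x y; apply rst_sym.
  - intros a b c f f' g g' H1 H2. eapply rst_trans.
    apply zz_eq_app_l; eauto. apply zz_eq_app_r; auto.
  - intros. apply rst_refl.
  - intros. rewrite zz_app_nil_r. apply rst_refl.
  - intros. rewrite zz_app_assoc. apply rst_refl.
Qed.

End ZZ.

Section ZZFunctors.
Context {C : Cat} {hC : IsCategory C} (pb : HasPullbacks C) (po : HasPushouts C)
  (A : MorPred C) (hA : IsSubcat A) (hst : PullbackStable A).

Lemma ztc_red {x y : C} (w w' : zz A x y) :
  zz_red A x y w w' -> cospan_iso (zz_to_cospan po A w) (zz_to_cospan po A w').
Proof.
  induction 1; simpl.
  - eapply ciso_trans. apply ciso_sym, cospan_assoc.
    apply ciso_comp; [|apply ciso_refl].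
    apply (cospan_fl po f {| csp_apex := z; csp_l := g; csp_r := Cid z |}).
  - eapply ciso_trans. apply ciso_sym, cospan_assoc.
    apply ciso_comp; [|apply ciso_refl].
    apply (cospan_fr po {| csp_apex := x; csp_l := Cid x; csp_r := g |} h).
  - apply (cospan_id_l po).
  - apply (cospan_id_l po).
  - apply ciso_comp; [|apply ciso_refl]. apply ciso_legs; auto; reflexivity.
  - apply ciso_comp; [|apply ciso_refl]. apply ciso_legs; auto; reflexivity.
  - apply ciso_comp; [apply ciso_refl|auto].
  - apply ciso_comp; [apply ciso_refl|auto].
Qed.

Lemma ztc_app {x y z : C} (w : zz A x y) (v : zz A y z) :
  cospan_iso (zz_to_cospan po A (zz_app w v))
             (cospan_comp po (zz_to_cospan po A w) (zz_to_cospan po A v)).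
Proof.
  induction w; simpl.
  - apply ciso_sym, cospan_id_l.
  - eapply ciso_trans. apply ciso_comp; [apply ciso_refl|apply IHw].
    apply ciso_sym, cospan_assoc.
  - eapply ciso_trans. apply ciso_comp; [apply ciso_refl|apply IHw].
    apply ciso_sym, cospan_assoc.
Qed.

Lemma ZZtoCospan_functor : IsFunctor (ZZtoCospan po A).
Proof.
  split; [|split]; simpl.
  - intros a b f g H. induction H.
    + apply ztc_red; auto.
    + apply ciso_refl.
    + apply ciso_sym; auto.
    + eapply ciso_trans; eauto.
  - intros. apply ciso_refl.
  - intros. apply ztc_app.
Qed.

Definition zsp {x y : C} (w : zz A x y) : span C x y := proj1_sig (zz_to_span pb A hA hst w).

Lemma zsp_red {x y : C} (w w' : zz A x y) :
  zz_red A x y w w' -> span_iso (zsp w) (zsp w').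
Proof.
  unfold zsp. induction 1; simpl.
  - eapply siso_trans. apply siso_sym, span_assoc.
    apply siso_comp; [|apply siso_refl].
    apply (span_fr pb {| sp_apex := x; sp_l := Cid x; sp_r := f |} g).
  - eapply siso_trans. apply siso_sym, span_assoc.
    apply siso_comp; [|apply siso_refl].
    apply (span_fl pb g {| sp_apex := z; sp_l := h; sp_r := Cid z |}).
  - apply (span_id_l pb).
  - apply (span_id_l pb).
  - apply siso_comp; [|apply siso_refl]. apply siso_legs; auto; reflexivity.
  - apply siso_comp; [|apply siso_refl]. apply siso_legs; auto; reflexivity.
  - apply siso_comp; [apply siso_refl|auto].
  - apply siso_comp; [apply siso_refl|auto].
Qed.

Lemma zsp_app {x y z : C} (w : zz A x y) (v : zz A y z) :
  span_iso (zsp (zz_app w v)) (span_comp pb (zsp w) (zsp v)).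
Proof.
  unfold zsp. induction w; simpl.
  - apply siso_sym, span_id_l.
  - eapply siso_trans. apply siso_comp; [apply siso_refl|apply IHw].
    apply siso_sym, span_assoc.
  - eapply siso_trans. apply siso_comp; [apply siso_refl|apply IHw].
    apply siso_sym, span_assoc.
Qed.

Lemma ZZtoSpan_functor : IsFunctor (ZZtoSpan pb A hA hst).
Proof.
  split; [|split]; simpl.
  - intros a b f g H. induction H.
    + apply zsp_red; auto.
    + apply siso_refl.
    + apply siso_sym; auto.
    + eapply siso_trans; eauto.
  - intros. apply siso_refl.
  - intros. apply zsp_app.
Qed.

End ZZFunctors.

Lemma Gamma_functor {C : Cat} {hC : IsCategory C} (po : HasPushouts C) (M : MorPred C)
  (hMiso : ContainsIsos M) : IsFunctor (GammaF po M).
Proof.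
  split; [|split]; simpl.
  - intros. apply corel_of_iso; auto.
  - intros. apply rst_refl.
  - intros. apply rst_refl.
Qed.

Lemma hsym {C : Cat} {hC : IsCategory C} {a b : C} (f g : Hm a b) : f =~ g -> g =~ f.
Proof. intros; symmetry; auto. Qed.

Lemma lift2 {C : Cat} {hC : IsCategory C} {b c d : C} (f : Hm b c) (g : Hm c d) (h : Hm b d) :
  f >> g =~ h -> forall w (x : Hm w b), (x >> f) >> g =~ x >> h.
Proof. intros H w x. rewrite cassoc, H. reflexivity. Qed.

Ltac lrw H := rewrite <- ?cassoc; first [rewrite (lift2 _ _ _ H) | rewrite H]; rewrite <- ?cassoc.
Ltac lrwr H := lrw (hsym _ _ H).

Section Pi.
Context {C : Cat} {hC : IsCategory C} (pb : HasPullbacks C) (po : HasPushouts C)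
  (M A : MorPred C) (hMiso : ContainsIsos M) (hcost : Costable M)
  (hcond : PbPoCondition M A).

Definition pic {x y : C} (s : span C x y) : cospan C x y :=
  {| csp_apex := po_ob po (sp_l s) (sp_r s);
     csp_l := po_q1 po (sp_l s) (sp_r s);
     csp_r := po_q2 po (sp_l s) (sp_r s) |}.

Lemma pic_iso {x y : C} (s t : span C x y) : span_iso s t -> cospan_iso (pic s) (pic t).
Proof.
  intros [i [Hi [H1 H2]]].
  pose proof (po_iso_pre i _ _ _ _ Hi (po_spec C po _ _ _ (sp_l t) (sp_r t))) as P.
  apply (po_resp _ (sp_l s) _ (sp_r s) _ _ _ _ H1 H2 (reflexivity _) (reflexivity _)) in P.
  destruct (po_uniq _ _ _ _ _ _ (po_spec C po _ _ _ (sp_l s) (sp_r s)) P) as [j [Hj [J1 J2]]].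
  exists j. split; auto.
Qed.

Lemma pic_id (x : C) : cospan_iso (pic (span_id x)) (cospan_id x).
Proof.
  destruct (po_uniq _ _ _ _ _ _ (po_spec C po _ _ _ (Cid x) (Cid x)) (po_id (Cid x)))
    as [j [Hj [J1 J2]]].
  exists j. split; auto.
Qed.

Lemma pic_comp {x y z : C} (s : span C x y) (t : span C y z) :
  A _ _ (sp_r s) -> A _ _ (sp_l t) ->
  corel_step M (pic (span_comp pb s t)) (cospan_comp po (pic s) (pic t)).
Proof.
  intros HAb HAc.
  destruct s as [S a b], t as [T c d]; simpl in *.
  pose proof (pb_spec C pb _ _ _ b c) as PB.
  set (p1 := pb_p1 pb b c) in *. set (p2 := pb_p2 pb b c) in *.
  pose proof (po_spec C po _ _ _ (p1 >> a) (p2 >> d)) as PK.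
  set (k1 := po_q1 po (p1 >> a) (p2 >> d)) in *. set (k2 := po_q2 po (p1 >> a) (p2 >> d)) in *.
  pose proof (po_spec C po _ _ _ a b) as PU.
  set (u1 := po_q1 po a b) in *. set (u2 := po_q2 po a b) in *.
  pose proof (po_spec C po _ _ _ c d) as PV.
  set (v1 := po_q1 po c d) in *. set (v2 := po_q2 po c d) in *.
  pose proof (po_spec C po _ _ _ u2 v1) as PW.
  set (w1 := po_q1 po u2 v1) in *. set (w2 := po_q2 po u2 v1) in *.
  pose proof (po_spec C po _ _ _ p1 p2) as PG.
  set (g1 := po_q1 po p1 p2) in *. set (g2 := po_q2 po p1 p2) in *.
  pose proof PB as [Hp _]. pose proof PK as [Hk UK]. pose proof PU as [Hu UU].
  pose proof PV as [Hv UV]. pose proof PW as [Hw UW]. pose proof PG as [Hg UG].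
  destruct (UG _ b c Hp) as [mu [[M1 M2] _]].
  assert (Mmu : M _ _ mu) by exact (hcond _ _ _ b c HAb HAc _ p1 p2 PB _ g1 g2 PG mu M1 M2).
  destruct (UK _ (u1 >> w1) (v2 >> w2)) as [n [[N1 N2] _]].
  { lrw Hu. lrw Hp. lrw Hw. lrw Hv. reflexivity. }
  destruct (UG _ (a >> k1) (d >> k2)) as [phi [[F1 F2] _]].
  { rewrite <- !cassoc. exact Hk. }
  assert (Pn : IsPushout phi mu n (u2 >> w1)).
  { split.
    - apply (po_epi _ _ _ _ PG).
      + lrw F1. lrw N1. lrw Hu. lrw M1. reflexivity.
      + lrw F2. lrw N2. lrwr Hv. lrwr Hw. lrw M2. reflexivity.
    - intros Q x0 y0 Hxy.
      destruct (UU _ (k1 >> x0) y0) as [al [[A1 A2] Au]].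
      { lrwr F1. lrw Hxy. lrw M1. reflexivity. }
      destruct (UV _ y0 (k2 >> x0)) as [be [[B1 B2] Bu]].
      { transitivity ((g2 >> mu) >> y0). apply cmp_Proper; [symmetry; exact M2|reflexivity]. lrwr Hxy. lrw F2. reflexivity. }
      destruct (UW _ al be) as [t [[T1 T2] Tu]].
      { rewrite A2, B1. reflexivity. }
      exists t. split. split.
      + apply (po_epi _ _ _ _ PK).
        * lrw N1. lrw T1. lrw A1. reflexivity.
        * lrw N2. lrw T2. lrw B2. reflexivity.
      + lrw T1. exact A2.
      + intros t' H1 H2. apply Tu.
        * apply Au.
          -- lrwr N1. lrw H1. reflexivity.
          -- rewrite <- cassoc; exact H2.
        * apply Bu.
          -- lrwr Hw. exact H2.
          -- lrwr N2. lrw H1. reflexivity. }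
  exists n. split.
  - apply (proj2 (hcost _ _ _ _ _ _ _ _ Pn)); auto.
  - simpl. fold p1 p2 k1 k2 u1 u2 v1 v2 w1 w2. split; auto.
Qed.

End Pi.

Section PiF.
Context {C : Cat} {hC : IsCategory C} (pb : HasPullbacks C) (po : HasPushouts C)
  (M A : MorPred C) (hMiso : ContainsIsos M) (hcost : Costable M)
  (hcond : PbPoCondition M A) (hA : IsSubcat A) (hst : PullbackStable A).

Lemma PiF_functor : IsFunctor (PiF pb po M A hA hst).
Proof.
  split; [|split]; simpl.
  - intros a b f g H. apply corel_of_iso; auto. apply (pic_iso po _ _ H).
  - intros a. apply corel_of_iso; auto. apply (pic_id po a).
  - intros a b c f g. apply rst_step.
    destruct f as [f [Hf1 Hf2]], g as [g [Hg1 Hg2]]. simpl.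
    apply (pic_comp pb po M A hcost hcond f g Hf2 Hg1).
Qed.

Lemma pic_fwd {x y : C} (f : Hm x y) :
  cospan_iso (pic po {| sp_apex := x; sp_l := Cid x; sp_r := f |})
             {| csp_apex := y; csp_l := f; csp_r := Cid y |}.
Proof.
  destruct (po_uniq _ _ _ _ _ _ (po_spec C po _ _ _ (Cid x) f) (po_id f)) as [j [Hj [J1 J2]]].
  exists j. split; auto.
Qed.

Lemma pic_bwd {x y : C} (g : Hm y x) :
  cospan_iso (pic po {| sp_apex := y; sp_l := g; sp_r := Cid y |})
             {| csp_apex := x; csp_l := Cid x; csp_r := g |}.
Proof.
  destruct (po_uniq _ _ _ _ _ _ (po_spec C po _ _ _ g (Cid y)) (po_sym _ _ _ _ (po_id g)))
    as [j [Hj [J1 J2]]].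
  exists j. split; auto.
Qed.

Lemma pi_zz {x y : C} (w : zz A x y) :
  corel_eq M (pic po (zsp pb A hA hst w)) (zz_to_cospan po A w).
Proof.
  induction w; unfold zsp in *; simpl.
  - apply corel_of_iso; auto. apply (pic_id po x).
  - eapply corel_trans. apply rst_step.
    apply (pic_comp pb po M A hcost hcond); simpl; auto.
    exact (proj1 (proj2_sig (zz_to_span pb A hA hst w))).
    apply corel_comp; auto. apply corel_of_iso; auto. apply pic_fwd.
  - eapply corel_trans. apply rst_step.
    apply (pic_comp pb po M A hcost hcond); simpl; auto.
    apply (proj1 (proj2 hA)).
    exact (proj1 (proj2_sig (zz_to_span pb A hA hst w))).
    apply corel_comp; auto. apply corel_of_iso; auto. apply pic_bwd.
Qed.

End PiF.

Section Hcast.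
Context {D : Cat} {hD : IsCategory D}.

Lemma hcast_heq {a b a' b' : D} (ea : a = a') (eb : b = b') (x y : Hm a b) :
  x =~ y -> hcast ea eb x =~ hcast ea eb y.
Proof. destruct ea, eb; simpl; auto. Qed.

Lemma hcast_sym {a b a' b' : D} (ea : a = a') (eb : b = b') (x : Hm a b) :
  hcast (eq_sym ea) (eq_sym eb) (hcast ea eb x) = x.
Proof. destruct ea, eb; reflexivity. Qed.

Lemma hcast_id {a a' : D} (ea : a = a') : hcast ea ea (Cid a) = Cid a'.
Proof. destruct ea; reflexivity. Qed.

End Hcast.

Section Universal.
Context {C : Cat} {hC : IsCategory C} (pb : HasPullbacks C) (po : HasPushouts C)
  (M A : MorPred C) (hMiso : ContainsIsos M) (hmono : AllMono M)
  (hA : IsSubcat A) (hMA : forall a b (f : Hm a b), M a b f -> A a b f)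
  (hst : PullbackStable A).

Lemma mono_pb {N N' : C} (m : Hm N N') : IsMono m -> IsPullback m m (Cid N) (Cid N).
Proof.
  intros Hm. split. reflexivity.
  intros w u v H. exists u. split. split. apply cid_r. rewrite cid_r. apply Hm; auto.
  intros t' H1 _. rewrite cid_r in H1; auto.
Qed.

Lemma zsp_mm {N N' : C} (m : Hm N N') (hm : A _ _ m) :
  M _ _ m ->
  span_iso (zsp pb A hA hst (zz_fwd m hm (zz_bwd m hm (zz_nil N)))) (span_id N).
Proof.
  intros HM. unfold zsp; simpl.
  eapply siso_trans. apply siso_comp; [apply siso_refl|apply span_id_r].
  simpl.
  pose proof (@po_uniq (Cop C) _ _ _ _ _ _ m m _ _ (Cid N) (Cid N)
                (pb_spec C pb _ _ _ m m) (mono_pb m (hmono _ _ m HM))) as [i [Hi [I1 I2]]].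
  apply siso_sym.
  exists i. split. apply iso_unop; auto. simpl in *. split.
  - rewrite cid_r. exact I1.
  - rewrite cid_r. exact I2.
Qed.

Lemma ztc_mm {N N' : C} (m : Hm N N') (hm : A _ _ m) :
  cospan_iso (zz_to_cospan po A (zz_fwd m hm (zz_bwd m hm (zz_nil N))))
             {| csp_apex := N'; csp_l := m; csp_r := m |}.
Proof.
  simpl. eapply ciso_trans. apply ciso_comp; [apply ciso_refl|apply cospan_id_r].
  eapply ciso_trans. apply (cospan_fl po m {| csp_apex := N'; csp_l := Cid N'; csp_r := m |}).
  simpl. apply ciso_legs; [apply cid_r|reflexivity].
Qed.

Lemma universal (D : Cat) (hD : IsCategory D)
  (h : Functor (SpanACat pb A hA hst) D) (k : Functor (CospanCat po) D) :
  IsFunctor h -> IsFunctor k ->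
  FunEq (Fcomp (ZZtoSpan pb A hA hst) h) (Fcomp (ZZtoCospan po A) k) ->
  exists u : Functor (CorelCat po M) D,
    IsFunctor u /\ FunEq (Fcomp (PiF pb po M A hA hst) u) h /\ FunEq (Fcomp (GammaF po M) u) k /\
    forall u' : Functor (CorelCat po M) D,
      IsFunctor u' -> FunEq (Fcomp (PiF pb po M A hA hst) u') h ->
      FunEq (Fcomp (GammaF po M) u') k -> FunEq u' u.
Proof.
  intros [Fh1 [Fh2 Fh3]] [Fk1 [Fk2 Fk3]] [e He]. simpl in He.
  set (u := @Build_Functor (CorelCat po M) D (fun x => Fob k x)
              (fun x y (s : cospan C x y) => Fhm k (a := x) (b := y) s)).
  assert (Kmm : forall (N N' : C) (m : Hm N N'), M _ _ m ->
            Fhm k (a := N) (b := N) {| csp_apex := N'; csp_l := m; csp_r := m |} =~ Cid (Fob k N)).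
  { intros N N' m HM.
    set (w := zz_fwd m (hMA _ _ _ HM) (zz_bwd m (hMA _ _ _ HM) (zz_nil N))).
    pose proof (He N N w) as H1.
    transitivity (Fhm k (a := N) (b := N) (zz_to_cospan po A w)).
    { symmetry. apply Fk1. apply ztc_mm. }
    rewrite <- H1.
    transitivity (hcast (e N) (e N) (Fhm h (Cid (c0 := SpanACat pb A hA hst) N))).
    { apply hcast_heq. apply Fh1. apply (zsp_mm m (hMA _ _ _ HM) HM). }
    transitivity (hcast (e N) (e N) (Cid (Fob h N))).
    { apply hcast_heq. apply Fh2. }
    rewrite hcast_id. reflexivity. }
  exists u. split; [|split; [|split]].
  - split; [|split]; simpl.
    + intros a b s s' H. induction H.
      * destruct H as [m [HM [H1 H2]]].
        destruct x as [S f g], y as [S' f' g']; simpl in *.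
        set (X := {| csp_apex := S; csp_l := f; csp_r := Cid S |} : cospan C a S).
        set (Y := {| csp_apex := S; csp_l := Cid S; csp_r := g |} : cospan C S b).
        set (MM := {| csp_apex := S'; csp_l := m; csp_r := m |} : cospan C S S).
        assert (E1 : cospan_iso {| csp_apex := S; csp_l := f; csp_r := g |} (cospan_comp po X Y)).
        { apply ciso_sym. eapply ciso_trans. apply (cospan_fl po f Y).
          simpl. apply ciso_legs; [apply cid_r|reflexivity]. }
        assert (E2 : cospan_iso {| csp_apex := S'; csp_l := f'; csp_r := g' |}
                        (cospan_comp po X (cospan_comp po MM Y))).
        { apply ciso_sym. eapply ciso_trans. apply ciso_comp; [apply ciso_refl|apply (cospan_fr po MM g)].
          eapply ciso_trans. apply (cospan_fl po f).
          simpl. apply ciso_legs; auto. }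
        apply (Fk1 _ _ _ _) in E1. apply (Fk1 _ _ _ _) in E2.
        rewrite E1, E2. symmetry.
        transitivity (Fhm k X >> Fhm k (cospan_comp po MM Y)). apply Fk3.
        transitivity (Fhm k X >> (Fhm k MM >> Fhm k Y)).
        { apply cmp_Proper; [reflexivity|apply Fk3]. }
        transitivity (Fhm k X >> (Cid _ >> Fhm k Y)).
        { apply cmp_Proper; [reflexivity|]. apply cmp_Proper; [apply Kmm; auto|reflexivity]. }
        rewrite cid_l. symmetry. apply Fk3.
      * reflexivity.
      * symmetry; auto.
      * etransitivity; eauto.
    + intros a. apply Fk2.
    + intros a b c f g. apply Fk3.
  - exists (fun x => eq_sym (e x)). intros a b s. simpl.
    destruct s as [s0 [Hs1 Hs2]] eqn:Es.
    set (w := zz_bwd (sp_l s0) Hs1 (zz_fwd (sp_r s0) Hs2 (@zz_nil C A b))).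
    pose proof (He a b w) as H1.
    assert (E1 : span_iso (zsp pb A hA hst w) s0).
    { unfold zsp, w; simpl.
      eapply siso_trans. apply siso_comp; [apply siso_refl|apply span_id_r].
      eapply siso_trans. apply (span_fl pb (sp_l s0) {| sp_apex := sp_apex s0; sp_l := Cid _; sp_r := sp_r s0 |}).
      destruct s0; simpl. apply siso_legs; [apply cid_l|reflexivity]. }
    assert (E2 : cospan_iso (zz_to_cospan po A w) (pic po s0)).
    { unfold w; simpl.
      eapply ciso_trans. apply ciso_comp; [apply ciso_refl|apply cospan_id_r].
      simpl. apply ciso_legs; apply cid_l. }
    apply (Fk1 _ _ _ _) in E2.
    assert (E3 : Fhm h (zz_to_span pb A hA hst w) =~ Fhm h (exist _ s0 (conj Hs1 Hs2))).
    { apply Fh1. exact E1. }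
    transitivity (hcast (eq_sym (e a)) (eq_sym (e b)) (Fhm k (zz_to_cospan po A w))).
    { apply hcast_heq. symmetry. exact E2. }
    transitivity (hcast (eq_sym (e a)) (eq_sym (e b))
                    (hcast (e a) (e b) (Fhm h (zz_to_span pb A hA hst w)))).
    { apply hcast_heq. symmetry. exact H1. }
    rewrite hcast_sym. exact E3.
  - exists (fun x => eq_refl). intros a b s. simpl. reflexivity.
  - intros u' Fu' _ [e2 He2]. exists e2. intros a b s. exact (He2 a b s).
Qed.

End Universal.

Theorem theorem3p2 (C : Cat) (pb : HasPullbacks C) (po : HasPushouts C)
  (E M A : MorPred C)
  (hC : IsCategory C)
  (hEM : FactSystem E M) (hcost : Costable M) (hmono : AllMono M)
  (hA : IsSubcat A) (hMA : forall a b (f : Hm a b), M a b f -> A a b f)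
  (hst : PullbackStable A) (hcond : PbPoCondition M A) :
  IsCategory (ZZCat A) /\ IsCategory (SpanACat pb A hA hst) /\
  IsCategory (CospanCat po) /\ IsCategory (CorelCat po M) /\
  IsFunctor (ZZtoSpan pb A hA hst) /\ IsFunctor (ZZtoCospan po A) /\
  IsFunctor (PiF pb po M A hA hst) /\ IsFunctor (GammaF po M) /\
  IsPushoutCAT (ZZtoSpan pb A hA hst) (ZZtoCospan po A)
               (PiF pb po M A hA hst) (GammaF po M).
Proof.
  assert (hMiso : ContainsIsos M) by (destruct hEM as [_ [_ [_ [H _]]]]; exact H).
  split; [apply ZZ_cat|].
  split; [apply SpanA_cat|].
  split; [apply Cospan_cat|].
  split; [apply Corel_cat; auto|].
  split; [apply ZZtoSpan_functor|].
  split; [apply ZZtoCospan_functor|].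
  split; [apply PiF_functor; auto|].
  split; [apply Gamma_functor; auto|].
  split.
  - exists (fun x => eq_refl). intros a b w. simpl. apply (pi_zz pb po M A hMiso hcost hcond hA hst w).
  - intros D hD h k Fh Fk HE. apply universal; auto.
Qed.
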